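(* Let $(\mathbb R/\pi\mathbb Z)^3_{\rm reg}=\{(\alpha,\beta,\gamma)\in(\mathbb R/\pi\mathbb Z)^3:\sin2\beta\neq0\}$ and $U=\{a\in\mathcal A_2:|a|=1\}\setminus(\mathcal A_1e_2\cup\mathcal A_1)$. The map $$\Psi:(\mathbb R/\pi\mathbb Z)^3_{\rm reg}\to U/\{\pm1\},\qquad(\alpha,\beta,\gamma)\mapsto\pm\exp(\alpha e_1)\exp(\beta e_1e_2)\exp(\gamma e_1)$$ is a two-fold covering map; explicitly $\Psi^{-1}(\Psi(\alpha,\beta,\gamma))=\{(\alpha,\beta,\gamma),(\alpha+\tfrac12\pi,-\beta,\gamma+\tfrac12\pi)\}$.
   Context: $\mathcal A_2$ is the real associative algebra generated by $e_1,e_2$ with $e_1^2=e_2^2=-1$, $e_1e_2=-e_2e_1$, with Euclidean norm in the basis $1,e_1,e_2,e_1e_2$; $\exp x=\sum_{m\ge0}x^m/m!$. $\mathcal A_1=\mathbb R+\mathbb Re_1$ and $\mathcal A_1e_2=\mathbb Re_2+\mathbb Re_1e_2$. *)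

(* Defs.v *)
From HB Require Import structures.
From mathcomp Require Import all_boot all_order all_algebra.
From mathcomp Require Import all_classical all_reals all_analysis.
From mathcomp Require Import generic_quotient.
Local Open Scope quotient_scope.
Set Implicit Arguments. Unset Strict Implicit. Unset Printing Implicit Defensive.
Import Order.TTheory GRing.Theory Num.Theory.
Import numFieldNormedType.Exports.
Local Open Scope classical_set_scope.
Local Open Scope ring_scope.

(* A_2 as R^4, coordinates w.r.t. the basis 1, e1, e2, e1e2. *)
Notation A2 R := 'rV[R]_4.

Section A2.
Variable R : realType.
Local Notation A2 := (A2 R).

Definition mkA (a b c d : R) : A2 := \row_(i < 4) [:: a; b; c; d]`_i.
Definition co (a : A2) (k : nat) : R := a ord0 (inord k).

Definition aone : A2 := mkA 1 0 0 0.
Definition e1 : A2 := mkA 0 1 0 0.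
Definition e2 : A2 := mkA 0 0 1 0.
Definition e12 : A2 := mkA 0 0 0 1.

(* Product of A_2, determined by e1^2 = e2^2 = -1, e1e2 = -e2e1 (bilinear
   extension of the multiplication table of the basis 1,e1,e2,e1e2). *)
Definition amul (a b : A2) : A2 :=
  let a0 := co a 0 in let a1 := co a 1 in let a2 := co a 2 in let a3 := co a 3 in
  let b0 := co b 0 in let b1 := co b 1 in let b2 := co b 2 in let b3 := co b 3 in
  mkA (a0 * b0 - a1 * b1 - a2 * b2 - a3 * b3)
      (a0 * b1 + a1 * b0 + a2 * b3 - a3 * b2)
      (a0 * b2 - a1 * b3 + a2 * b0 + a3 * b1)
      (a0 * b3 + a1 * b2 - a2 * b1 + a3 * b0).

Definition apow (x : A2) (m : nat) : A2 := iter m (amul x) aone.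

Definition aexp (x : A2) : A2 :=
  limn (series (fun m : nat => (m`!%:R)^-1 *: apow x m)).

Definition anorm (a : A2) : R := Num.sqrt (\sum_(i < 4) a ord0 i ^+ 2).

Definition in_A1 (a : A2) : Prop := co a 2 = 0 /\ co a 3 = 0.
Definition in_A1e2 (a : A2) : Prop := co a 0 = 0 /\ co a 1 = 0.

Definition Uset : set A2 := [set a | anorm a = 1 /\ ~ in_A1e2 a /\ ~ in_A1 a].

Definition modpi (x y : R) : bool := `[< exists k : int, x - y = k%:~R * (trigo.pi : R) >].

Lemma modpi_refl : reflexive modpi.
Proof. move=> x; apply/asboolP; exists 0; by rewrite subrr mul0r. Qed.
Lemma modpi_sym : symmetric modpi.
Proof.
move=> x y; apply/asboolP/asboolP => -[k hk]; exists (- k);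
  by rewrite mulrNz mulNr -hk opprB.
Qed.
Lemma modpi_trans : transitive modpi.
Proof.
move=> y x z /asboolP[k hk] /asboolP[l hl]; apply/asboolP; exists (k + l).
by rewrite mulrzDr mulrDl -hk -hl addrA subrK.
Qed.
Definition modpi_equiv := EquivRel modpi modpi_refl modpi_sym modpi_trans.

Definition Rmodpi := {eq_quot modpi_equiv}.
HB.instance Definition _ := Topological.copy Rmodpi (quotient_topology Rmodpi).
HB.instance Definition _ := Quotient.on Rmodpi.

Definition pmrel (a b : A2) : bool := (a == b) || (a == - b).
Lemma pmrel_refl : reflexive pmrel.
Proof. by move=> a; rewrite /pmrel eqxx. Qed.
Lemma pmrel_sym : symmetric pmrel.
Proof.
move=> a b; rewrite /pmrel [b == a]eq_sym; congr (_ || _).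
by apply/eqP/eqP => ->; rewrite opprK.
Qed.
Lemma pmrel_trans : transitive pmrel.
Proof.
move=> b a c; rewrite /pmrel => /orP[] /eqP -> /orP[] /eqP ->.
- by rewrite eqxx.
- by rewrite eqxx orbT.
- by rewrite eqxx orbT.
- by rewrite opprK eqxx.
Qed.
Definition pm_equiv := EquivRel pmrel pmrel_refl pmrel_sym pmrel_trans.

Definition A2pm := {eq_quot pm_equiv}.
HB.instance Definition _ := Topological.copy A2pm (quotient_topology A2pm).
HB.instance Definition _ := Quotient.on A2pm.

Local Notation Torus3 := (Rmodpi * Rmodpi * Rmodpi)%type.

Definition reg3 : set Torus3 := [set x | sin (2 * repr x.1.2) != 0].

Definition Uquot : set A2pm := [set \pi_A2pm a | a in Uset].

Definition psi0 (al be ga : R) : A2 :=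
  amul (amul (aexp (al *: e1)) (aexp (be *: e12))) (aexp (ga *: e1)).

Definition Psi (x : Torus3) : A2pm :=
  \pi_A2pm (psi0 (repr x.1.1) (repr x.1.2) (repr x.2)).

Definition shift3 (x : Torus3) : Torus3 :=
  (\pi_Rmodpi (repr x.1.1 + (trigo.pi : R) / 2), \pi_Rmodpi (- repr x.1.2),
   \pi_Rmodpi (repr x.2 + (trigo.pi : R) / 2)).

End A2.

Notation Torus3 R := (Rmodpi R * Rmodpi R * Rmodpi R)%type.

Definition two_fold_covering {X Y : topologicalType} (p : X -> Y)
    (A : set X) (B : set Y) : Prop :=
  [/\ p @` A = B,
      {within A, continuous p} &
      forall y, B y -> exists V : set Y, [/\ open V, V y &
        exists O1 O2 : set X, [/\ open O1, open O2,
          A `&` p @^-1` V = (O1 `&` A) `|` (O2 `&` A),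
          O1 `&` O2 `&` A = set0 &
          forall W, W = O1 `&` A \/ W = O2 `&` A ->
            [/\ p @` W = V `&` B, {within W, continuous p} &
             exists g : Y -> X,
               [/\ forall z, (V `&` B) z -> W (g z) /\ p (g z) = z,
                   forall x, W x -> g (p x) = x &
                   {within V `&` B, continuous g}]]]]].

(* Main.v *)
Require Import Defs.
From HB Require Import structures.
From mathcomp Require Import all_boot all_order all_algebra.
From mathcomp Require Import all_classical all_reals all_analysis.
From mathcomp Require Import generic_quotient ring lra zify.
From Stdlib Require Import Lia.
Set Implicit Arguments. Unset Strict Implicit. Unset Printing Implicit Defensive.
Import Order.TTheory GRing.Theory Num.Theory.
Import numFieldNormedType.Exports.
Local Open Scope classical_set_scope.
Local Open Scope ring_scope.
Local Open Scope quotient_scope.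

Section A.
Variable R : realType.
Local Notation A2 := 'rV[R]_4.
Local Notation mkA := (@mkA R).
Local Notation co := (@co R).

Lemma coE0 a b c d : co (mkA a b c d) 0 = a.
Proof. by rewrite /co /mkA mxE inordK. Qed.
Lemma coE1 a b c d : co (mkA a b c d) 1 = b.
Proof. by rewrite /co /mkA mxE inordK. Qed.
Lemma coE2 a b c d : co (mkA a b c d) 2 = c.
Proof. by rewrite /co /mkA mxE inordK. Qed.
Lemma coE3 a b c d : co (mkA a b c d) 3 = d.
Proof. by rewrite /co /mkA mxE inordK. Qed.
Definition coE := (coE0, coE1, coE2, coE3).

Lemma A2_eta (a : A2) : a = mkA (co a 0) (co a 1) (co a 2) (co a 3).
Proof.
apply/rowP => i; rewrite /mkA mxE /co.
have -> : i = inord i by apply: val_inj; rewrite /= inordK.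
case: i => [[|[|[|[|k]]]] Hi] //=; rewrite ?inordK //.
Qed.

Lemma mkA_inj a b c d a' b' c' d' : mkA a b c d = mkA a' b' c' d' ->
  [/\ a = a', b = b', c = c' & d = d'].
Proof.
move=> h; split.
- by rewrite -(coE0 a b c d) h coE.
- by rewrite -(coE1 a b c d) h coE.
- by rewrite -(coE2 a b c d) h coE.
- by rewrite -(coE3 a b c d) h coE.
Qed.

Lemma mkAE a b c d :
  mkA a b c d = a *: aone R + b *: e1 R + c *: e2 R + d *: e12 R.
Proof.
apply/rowP => i; rewrite !mxE.
case: i => [[|[|[|[|k]]]] Hi] //=; rewrite ?mulr1 ?mulr0 ?addr0 ?add0r //.
Qed.

Lemma mkAN a b c d : - mkA a b c d = mkA (-a) (-b) (-c) (-d).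
Proof. by apply/rowP => i; rewrite !mxE; case: i => [[|[|[|[|k]]]] Hi]. Qed.

Lemma mkAD a b c d a' b' c' d' :
  mkA a b c d + mkA a' b' c' d' = mkA (a+a') (b+b') (c+c') (d+d').
Proof. by apply/rowP => i; rewrite !mxE; case: i => [[|[|[|[|k]]]] Hi]. Qed.

Lemma mkAZ k a b c d : k *: mkA a b c d = mkA (k*a) (k*b) (k*c) (k*d).
Proof. by apply/rowP => i; rewrite !mxE; case: i => [[|[|[|[|k']]]] Hi]. Qed.

Lemma mkA0 : mkA 0 0 0 0 = 0.
Proof. by apply/rowP => i; rewrite !mxE; case: i => [[|[|[|[|k']]]] Hi]. Qed.

Lemma amul_mkA a0 a1 a2 a3 b0 b1 b2 b3 :
  amul (mkA a0 a1 a2 a3) (mkA b0 b1 b2 b3) =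
  mkA (a0 * b0 - a1 * b1 - a2 * b2 - a3 * b3)
      (a0 * b1 + a1 * b0 + a2 * b3 - a3 * b2)
      (a0 * b2 - a1 * b3 + a2 * b0 + a3 * b1)
      (a0 * b3 + a1 * b2 - a2 * b1 + a3 * b0).
Proof. by rewrite /amul !coE. Qed.

Section Cplx.
Variable f : R -> R -> A2.
Hypothesis fE : forall p q, f p q = p *: f 1 0 + q *: f 0 1.
Variable x : A2.
Variable t : R.
Hypothesis xmul : forall p q, amul x (f p q) = f (- (t * q)) (t * p).
Hypothesis f10 : f 1 0 = aone R.

Lemma apow_cplx m : apow x m =
  f ((~~ odd m)%:R * (-1) ^+ m./2 * t ^+ m)
    ((odd m)%:R * (-1) ^+ m.-1./2 * t ^+ m).
Proof.
elim: m => [|m IH]; first by rewrite /apow /= -f10 expr0 !mulr1.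
rewrite /apow iterS -/(apow x m) IH xmul; congr f.
- case Hm: (odd m); rewrite /= Hm /=.
  + case: m Hm IH => [//|m] Hm _ /=.
    rewrite !mul1r !exprS; ring.
  + by rewrite !mul0r mulr0 oppr0.
- case Hm: (odd m); rewrite /= Hm /=.
  + by rewrite !mul0r mulr0.
  + rewrite !mul1r exprS; ring.
Qed.
End Cplx.

Lemma cvg_cos_series (t : R) : series (cos_coeff t) n @[n --> \oo] --> cos t.
Proof. rewrite cos.unlock; exact: is_cvg_series_cos_coeff. Qed.
Lemma cvg_sin_series (t : R) : series (sin_coeff t) n @[n --> \oo] --> sin t.
Proof. rewrite sin.unlock; exact: is_cvg_series_sin_coeff. Qed.

Lemma aexp_cplx (f : R -> R -> A2) (x : A2) (t : R) :
  (forall p q, f p q = p *: f 1 0 + q *: f 0 1) ->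
  (forall p q, amul x (f p q) = f (- (t * q)) (t * p)) ->
  f 1 0 = aone R -> aexp x = f (cos t) (sin t).
Proof.
move=> fE xmul f10.
have E : series (fun m : nat => (m`!%:R)^-1 *: apow x m) =
   (fun n => series (cos_coeff t) n *: f 1 0 + series (sin_coeff t) n *: f 0 1).
  apply/funext => n; rewrite /series /= !scaler_suml -big_split /=.
  apply: eq_bigr => m _; rewrite (apow_cplx xmul f10) fE scalerDr !scalerA.
  congr (_ *: _ + _ *: _); rewrite /cos_coeff /sin_coeff /= -?exprnP; ring.
rewrite /aexp E (fE (cos t)); apply: cvg_lim => //.
apply: cvgD; apply: cvgZr_tmp.
- exact: cvg_cos_series.
- exact: cvg_sin_series.
Qed.

Lemma aexp_e1 (t : R) : aexp (t *: e1 R) = mkA (cos t) (sin t) 0 0.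
Proof.
apply: (@aexp_cplx (fun p q => mkA p q 0 0)).
- by move=> p q; rewrite !mkAZ mkAD !mulr0 !mulr1 ?addr0 ?add0r.
- move=> p q; rewrite /e1 mkAZ amul_mkA; congr mkA; ring.
- by [].
Qed.

Lemma aexp_e12 (t : R) : aexp (t *: e12 R) = mkA (cos t) 0 0 (sin t).
Proof.
apply: (@aexp_cplx (fun p q => mkA p 0 0 q)).
- by move=> p q; rewrite !mkAZ mkAD !mulr0 !mulr1 ?addr0 ?add0r.
- move=> p q; rewrite /e12 mkAZ amul_mkA; congr mkA; ring.
- by [].
Qed.

Definition psiR (be s d : R) : A2 :=
  mkA (cos be * cos s) (cos be * sin s) (sin be * sin d) (sin be * cos d).

Lemma psi0E al be ga : psi0 al be ga = psiR be (al + ga) (ga - al).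
Proof.
rewrite /psi0 aexp_e1 aexp_e12 aexp_e1 !amul_mkA /psiR.
rewrite cosD sinD sinB cosB; congr mkA; ring.
Qed.

End A.

Section B.
Variable R : realType.
Local Notation PI := (trigo.pi : R).

Lemma N1n_pm (n : nat) : (-1 : R) ^+ n = 1 \/ (-1 : R) ^+ n = -1.
Proof.
elim: n => [|n [] IH]; first by left; rewrite expr0.
- by right; rewrite exprS IH mulr1.
- by left; rewrite exprS IH mulrN1 opprK.
Qed.

Lemma N1z_pm (k : int) : (-1 : R) ^ k = 1 \/ (-1 : R) ^ k = -1.
Proof.
case: k => n; rewrite ?NegzE.
- by rewrite -exprnP; exact: N1n_pm.
- rewrite -exprz_inv invrN invr1 -exprnP; exact: N1n_pm.
Qed.

Lemma N1zD (k l : int) : (-1 : R) ^ (k + l) = (-1) ^ k * (-1) ^ l.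
Proof. by rewrite expfzDr // oppr_eq0 oner_eq0. Qed.

Lemma N1z_sq (k : int) : (-1 : R) ^ k * (-1) ^ k = 1.
Proof. by case: (N1z_pm k) => ->; rewrite ?mulNr ?mulrN ?opprK mulr1. Qed.

Lemma N1zN (k : int) : (-1 : R) ^ (- k) = (-1) ^ k.
Proof.
have : (-1 : R) ^ (k + - k) = 1 by rewrite subrr expr0z.
rewrite N1zD => h.
case: (N1z_pm k) => e; rewrite e in h *.
- by rewrite mul1r in h; exact: h.
- by rewrite mulN1r in h; apply/eqP; rewrite -eqr_oppLR h.
Qed.

Lemma N1z2 (j : int) : (-1 : R) ^ (j * 2) = 1.
Proof. by rewrite mulrC -[2]/(1+1) mulrDl mul1r N1zD N1z_sq. Qed.

Lemma N1z21 (j : int) : (-1 : R) ^ (j * 2 + 1) = -1.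
Proof. by rewrite N1zD N1z2 expr1z mul1r. Qed.

Lemma int_parity (k : int) : exists j : int, k = j * 2 \/ k = j * 2 + 1.
Proof.
exists (k %/ 2)%Z; have := divz_eq k 2.
have h0 := modz_ge0 k (isT : (2:int) != 0).
have h1 := ltz_pmod k (isT : (0:int) < 2).
move: h0 h1; set r := (k %% 2)%Z => h0 h1 E.
have : r = 0 \/ r = 1 by lia.
by case=> Er; [left|right]; rewrite {1}E Er ?addr0.
Qed.

Lemma N1z_even (k : int) : (-1 : R) ^ k = 1 -> exists j, k = j * 2.
Proof.
case: (int_parity k) => j [] -> h; first by exists j.
by move: h; rewrite N1z21 => /eqP; rewrite -subr_eq0 -opprD oppr_eq0 -[1+1]/(2%:R) pnatr_eq0.
Qed.

Lemma N1z_odd (k : int) : (-1 : R) ^ k = -1 -> exists j, k = j * 2 + 1.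
Proof.
case: (int_parity k) => j [] -> h; last by exists j.
by move: h; rewrite N1z2 => /eqP; rewrite -subr_eq0 opprK -[1+1]/(2%:R) pnatr_eq0.
Qed.

Lemma cosDn (x : R) (n : nat) : cos (x + n%:R * PI) = (-1) ^+ n * cos x.
Proof. by rewrite mulr_natl alternatingn //; exact: cosDpi. Qed.
Lemma sinDn (x : R) (n : nat) : sin (x + n%:R * PI) = (-1) ^+ n * sin x.
Proof. by rewrite mulr_natl alternatingn //; exact: sinDpi. Qed.

Lemma cosDk (x : R) (k : int) : cos (x + k%:~R * PI) = (-1) ^ k * cos x.
Proof.
case: k => n; first by rewrite -exprnP -cosDn.
rewrite NegzE -exprz_inv invrN invr1 -exprnP.
have := cosDn (x - n.+1%:R * PI) n.+1; rewrite subrK => ->.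
rewrite mulrA -expr2 sqrr_sign mul1r; congr cos.
by rewrite -[(- (n.+1 : int))%:~R]/(- (n.+1%:R)) mulNr.
Qed.

Lemma sinDk (x : R) (k : int) : sin (x + k%:~R * PI) = (-1) ^ k * sin x.
Proof.
case: k => n; first by rewrite -exprnP -sinDn.
rewrite NegzE -exprz_inv invrN invr1 -exprnP.
have := sinDn (x - n.+1%:R * PI) n.+1; rewrite subrK => ->.
rewrite mulrA -expr2 sqrr_sign mul1r; congr sin.
by rewrite -[(- (n.+1 : int))%:~R]/(- (n.+1%:R)) mulNr.
Qed.

Lemma pi_gt0' : 0 < PI. Proof. exact: pi_gt0. Qed.

Lemma cos_eq1 (t : R) : cos t = 1 -> exists m : int, t = (m * 2)%:~R * PI.
Proof.
move=> ct.
set n := Num.floor (t / (PI *+ 2)).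
have hp : 0 < PI *+ 2 by rewrite pmulrn_lgt0 // pi_gt0.
have hl : n%:~R <= t / (PI *+ 2) by exact: floor_le.
have hu : t / (PI *+ 2) < (n + 1)%:~R by exact: floorD1_gt.
rewrite intrD in hu.
have hl' : n%:~R * (PI *+ 2) <= t by rewrite -ler_pdivlMr.
have hu' : t < (n%:~R + 1) * (PI *+ 2) by rewrite -ltr_pdivrMr.
set t0 := t - (n * 2)%:~R * PI.
have et0 : t0 = t + (- (n * 2))%:~R * PI by rewrite /t0 intrN mulNr.
have ct0 : cos t0 = 1 by rewrite et0 cosDk N1zN N1z2 mul1r.
have Ht0 : t0 = t - n%:~R * (PI *+ 2).
  rewrite /t0 intrM -mulrA; congr (_ - _ * _); exact: (mulr_natl PI 2).
have t0ge : 0 <= t0 by rewrite Ht0 subr_ge0.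
have t0lt : t0 < PI *+ 2 by rewrite Ht0; move: hu'; rewrite mulrDl mul1r; lra.
exists n.
case: (lerP t0 PI) => h.
- have : acos (cos t0) = t0 by apply: cosK; rewrite in_itv /= t0ge h.
  rewrite ct0 acos1 => h0.
  by apply/eqP; rewrite -subr_eq0 -/t0 -h0.
- have hh : - PI <= t0 - PI *+ 2 <= 0.
    apply/andP; split; rewrite mulr2n; lra.
  have := cosKN hh.
  have e2 : t0 - PI *+ 2 = t0 + (- 2%:Z)%:~R * PI.
    rewrite intrN mulNr; congr (_ - _); symmetry; exact: (mulr_natl PI 2).
  rewrite e2 cosDk ct0 mulr1 N1zN -exprnP expr2 mulrNN mulr1 acos1.
  move/eqP; rewrite eq_sym oppr_eq0 -e2 subr_eq0 => /eqP h2.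
  move: t0lt; rewrite h2; lra.
Qed.

Lemma cos_sin_eq (x y : R) : cos y = cos x -> sin y = sin x ->
  exists m : int, y - x = (m * 2)%:~R * PI.
Proof.
move=> hc hs; apply: cos_eq1.
by rewrite cosB hc hs -!expr2 cos2Dsin2.
Qed.

Lemma cos_sin_eqe (x y e : R) : e = 1 \/ e = -1 ->
  cos y = e * cos x -> sin y = e * sin x ->
  exists k : int, y - x = k%:~R * PI /\ (-1) ^ k = e.
Proof.
case=> -> hc hs.
- have [m hm] := cos_sin_eq (etrans hc (mul1r _)) (etrans hs (mul1r _)).
  by exists (m * 2); rewrite N1z2.
- have hc' : cos y = cos (x + PI) by rewrite hc cosDpi mulN1r.
  have hs' : sin y = sin (x + PI) by rewrite hs sinDpi mulN1r.
  have [m hm] := cos_sin_eq hc' hs'.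
  exists (m * 2 + 1); rewrite N1z21; split => //.
  by rewrite intrD mulrDl -hm mul1r; ring.
Qed.

End B.

Section F.
Variable R : realType.
Local Notation PI := (trigo.pi : R).

Lemma sin2_neq0 (b : R) : sin (2 * b) != 0 -> cos b != 0 /\ sin b != 0.
Proof.
rewrite mulr_natl sin_mulr2n -mulr_natl mulf_eq0 negb_or => /andP[_].
by rewrite mulf_eq0 negb_or => /andP[].
Qed.

Lemma sq_eq_pm (x y : R) : x ^+ 2 = y ^+ 2 -> exists e, (e = 1 \/ e = -1) /\ x = e * y.
Proof.
move/eqP; rewrite eqf_sqr => /orP[]/eqP ->.
- by exists 1; split; [left|rewrite mul1r].
- by exists (-1); split; [right|rewrite mulN1r].
Qed.

Lemma pm_sq (e : R) : e = 1 \/ e = -1 -> e * e = 1.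
Proof. by case=> ->; rewrite ?mulr1 ?mulrNN ?mulr1. Qed.

Lemma pm_mul (e f : R) : e = 1 \/ e = -1 -> f = 1 \/ f = -1 -> e * f = 1 \/ e * f = -1.
Proof. by case=> -> [] ->; rewrite ?mul1r ?mulN1r ?opprK; auto. Qed.

Lemma cancel_pm (c c' x x' e h : R) : c != 0 -> h = 1 \/ h = -1 ->
  c' = h * c -> c' * x' = e * (c * x) -> x' = (e * h) * x.
Proof.
move=> c0 hh -> E.
apply: (mulfI c0); apply: (mulfI (_ : h != 0)).
  by case: hh => ->; rewrite ?oppr_eq0 oner_eq0.
rewrite mulrA E; have := pm_sq hh; move=> hh2.
rewrite -[LHS]mul1r -hh2 -[RHS]mul1r. ring.
Qed.

Lemma sumsq_eq (c c' x x' y y' e : R) : e = 1 \/ e = -1 ->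
  x ^+ 2 + y ^+ 2 = 1 -> x' ^+ 2 + y' ^+ 2 = 1 ->
  c' * x' = e * (c * x) -> c' * y' = e * (c * y) -> c' ^+ 2 = c ^+ 2.
Proof.
move=> he h1 h1' E1 E2.
have : (c' * x') ^+ 2 + (c' * y') ^+ 2 = (e * (c * x)) ^+ 2 + (e * (c * y)) ^+ 2 by rewrite E1 E2.
have ee := pm_sq he.
have -> : (c' * x') ^+ 2 + (c' * y') ^+ 2 = c' ^+ 2 * (x' ^+ 2 + y' ^+ 2) by ring.
have -> : (e * (c * x)) ^+ 2 + (e * (c * y)) ^+ 2 = (e * e) * c ^+ 2 * (x ^+ 2 + y ^+ 2) by ring.
by rewrite h1 h1' ee !mulr1 mul1r.
Qed.

Definition mpi (x y : R) := exists k : int, x - y = k%:~R * PI.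

Lemma modpiP (x y : R) : modpi x y <-> mpi x y.
Proof. by split => [/asboolP|h]; [|apply/asboolP]. Qed.

Lemma angles_even (al ga al' ga' : R) (k1 k2 j : int) :
  (al' + ga') - (al + ga) = k1%:~R * PI -> (ga' - al') - (ga - al) = k2%:~R * PI ->
  k1 = j + j + k2 -> mpi al' al /\ mpi ga' ga.
Proof.
move=> h1 h2 hk; rewrite hk !intrD !mulrDl in h1.
split; [exists j | exists (j + k2)]; rewrite ?intrD ?mulrDl;
  move: h1 h2; generalize (j%:~R * PI) (k2%:~R * PI) => X Y; lra.
Qed.

Lemma angles_odd (al ga al' ga' : R) (k1 k2 j : int) :
  (al' + ga') - (al + ga) = k1%:~R * PI -> (ga' - al') - (ga - al) = k2%:~R * PI ->
  k1 = j + j + 1 + k2 -> mpi al' (al + PI / 2) /\ mpi ga' (ga + PI / 2).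
Proof.
move=> h1 h2 hk; rewrite hk !intrD !mulrDl ?intr1 ?mul1r in h1.
split; [exists j | exists (j + k2); rewrite intrD (mulrDl j%:~R k2%:~R PI)];
  move: h1 h2; generalize (j%:~R * PI) (k2%:~R * PI) => X Y; lra.
Qed.

Lemma N1_same (k1 k2 : int) : (-1 : R) ^ k1 = (-1) ^ k2 -> exists j, k1 = j + j + k2.
Proof.
move=> h; have : (-1 : R) ^ (k1 - k2) = 1 by rewrite N1zD N1zN h N1z_sq.
case/N1z_even => j hj; exists j; lia.
Qed.

Lemma N1_opp (k1 k2 : int) : (-1 : R) ^ k1 = - (-1) ^ k2 -> exists j, k1 = j + j + 1 + k2.
Proof.
move=> h; have : (-1 : R) ^ (k1 - k2) = -1 by rewrite N1zD N1zN h mulNr N1z_sq.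
case/N1z_odd => j hj; exists j; lia.
Qed.

Lemma fiberR (al be ga al' be' ga' e : R) : e = 1 \/ e = -1 ->
  sin (2 * be) != 0 -> sin (2 * be') != 0 ->
  psi0 al' be' ga' = e *: psi0 al be ga ->
  (mpi al' al /\ mpi be' be /\ mpi ga' ga) \/
  (mpi al' (al + PI / 2) /\ mpi be' (- be) /\ mpi ga' (ga + PI / 2)).
Proof.
move=> he /sin2_neq0 [cb0 sb0] /sin2_neq0 [cb0' sb0'].
rewrite !psi0E /psiR mkAZ => /mkA_inj [E0 E1 E2 E3].
have hc := sumsq_eq he (cos2Dsin2 _) (cos2Dsin2 _) E0 E1.
have hs := sumsq_eq he (cos2Dsin2 _) (cos2Dsin2 _) E3 E2.
have [h [hh eh]] := sq_eq_pm hc.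
have [z [hz ez]] := sq_eq_pm hs.
have [k1 [hk1 ek1]] := cos_sin_eqe (pm_mul he hh)
  (cancel_pm cb0 hh eh E0) (cancel_pm cb0 hh eh E1).
have [k2 [hk2 ek2]] := cos_sin_eqe (pm_mul he hz)
  (cancel_pm sb0 hz ez E3) (cancel_pm sb0 hz ez E2).
have e0 : e != 0 by case: he => ->; rewrite ?oppr_eq0 oner_eq0.
case: hh eh ek1 => -> eh ek1; case: hz ez ek2 => -> ez ek2.
- left; have [j hj] := N1_same (etrans ek1 (esym ek2)).
  have [ha hg] := angles_even hk1 hk2 hj.
  split => //; split => //.
  have [k [hk _]] := @cos_sin_eqe R be be' 1 (or_introl erefl) eh ez.
  by exists k.
- right; have [j hj] : exists j, k1 = j + j + 1 + k2.
    by apply: N1_opp; rewrite ek1 ek2; ring.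
  have [ha hg] := angles_odd hk1 hk2 hj.
  split => //; split => //.
  have c1 : cos be' = 1 * cos (- be) by rewrite cosN.
  have s1 : sin be' = 1 * sin (- be) by rewrite sinN ez !mulN1r mul1r.
  have [k [hk _]] := @cos_sin_eqe R (- be) be' 1 (or_introl erefl) c1 s1.
  by exists k.
- right; have [j hj] : exists j, k1 = j + j + 1 + k2.
    by apply: N1_opp; rewrite ek1 ek2; ring.
  have [ha hg] := angles_odd hk1 hk2 hj.
  split => //; split => //.
  have c1 : cos be' = -1 * cos (- be) by rewrite cosN.
  have s1 : sin be' = -1 * sin (- be) by rewrite sinN ez mulN1r mul1r opprK.
  have [k [hk _]] := @cos_sin_eqe R (- be) be' (-1) (or_intror erefl) c1 s1.
  by exists k.
- left; have [j hj] := N1_same (etrans ek1 (esym ek2)).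
  have [ha hg] := angles_even hk1 hk2 hj.
  split => //; split => //.
  have [k [hk _]] := @cos_sin_eqe R be be' (-1) (or_intror erefl) eh ez.
  by exists k.
Qed.

End F.

Section G.
Variable R : realType.
Local Notation PI := (trigo.pi : R).
Local Notation A2 := 'rV[R]_4.
Local Notation co := (@co R).

Lemma sum4_mkA (x y z w : R) :
  \sum_(i < 4) (mkA x y z w : A2) ord0 i ^+ 2 = x ^+ 2 + y ^+ 2 + z ^+ 2 + w ^+ 2.
Proof. by rewrite !big_ord_recr big_ord0 /= !mxE /= add0r. Qed.

Lemma anormE (a : A2) : anorm a = 1 ->
  co a 0 ^+ 2 + co a 1 ^+ 2 + co a 2 ^+ 2 + co a 3 ^+ 2 = 1.
Proof.
rewrite /anorm {1}(A2_eta a) sum4_mkA => h.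
rewrite -(@sqr_sqrtr _ (_ + _)) ?h ?expr1n //.
by rewrite !addr_ge0 // sqr_ge0.
Qed.

Lemma anorm_mkA (x y z w : R) : x ^+ 2 + y ^+ 2 + z ^+ 2 + w ^+ 2 = 1 ->
  anorm (mkA x y z w) = 1.
Proof. by rewrite /anorm sum4_mkA => ->; rewrite sqrtr1. Qed.

Lemma rot_inv (c s x y : R) : c ^+ 2 + s ^+ 2 = 1 -> (c * x + s * y) * c - (- s * x + c * y) * s = x.
Proof. move=> h; have -> : (c * x + s * y) * c - (- s * x + c * y) * s = x * (c ^+ 2 + s ^+ 2) by ring. by rewrite h mulr1. Qed.
Lemma rot_inv2 (c s x y : R) : c ^+ 2 + s ^+ 2 = 1 -> (c * x + s * y) * s + (- s * x + c * y) * c = y.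
Proof. move=> h; have -> : (c * x + s * y) * s + (- s * x + c * y) * c = y * (c ^+ 2 + s ^+ 2) by ring. by rewrite h mulr1. Qed.
Lemma rot_sq (c s x y : R) : c ^+ 2 + s ^+ 2 = 1 -> (c * x + s * y) ^+ 2 + (- s * x + c * y) ^+ 2 = x ^+ 2 + y ^+ 2.
Proof. move=> h; have -> : (c * x + s * y) ^+ 2 + (- s * x + c * y) ^+ 2 = (x ^+ 2 + y ^+ 2) * (c ^+ 2 + s ^+ 2) by ring. by rewrite h mulr1. Qed.

Lemma sqr_pos (x : R) : x != 0 -> 0 < x ^+ 2.
Proof. by move=> h; rewrite exprn_even_gt0 //= h. Qed.

Lemma cos_atan_gt0 (x : R) : 0 < cos (atan x).
Proof. by apply: cos_gt0_pihalf; rewrite atan_gtNpi2 atan_ltpi2. Qed.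

Lemma sin_atan (x : R) : sin (atan x) = x * cos (atan x).
Proof.
have h := atanK x; rewrite /tan in h.
by rewrite -[X in _ = X * _]h divfK // gt_eqF // cos_atan_gt0.
Qed.

Lemma cos_atan_sq (x : R) : cos (atan x) ^+ 2 * (1 + x ^+ 2) = 1.
Proof.
have h := cos2_tan2 (negbT (gt_eqF (cos_atan_gt0 x))).
rewrite atanK in h; rewrite -h mulfV //; apply: expf_neq0; exact: (negbT (gt_eqF (cos_atan_gt0 x))).
Qed.

Variables u v : R.
Definition b0 (a : A2) := cos u * co a 0 + sin u * co a 1.
Definition b1 (a : A2) := - sin u * co a 0 + cos u * co a 1.
Definition b3 (a : A2) := cos v * co a 3 + sin v * co a 2.
Definition b2 (a : A2) := - sin v * co a 3 + cos v * co a 2.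
Definition th1 (a : A2) := atan (b1 a / b0 a).
Definition th2 (a : A2) := atan (b2 a / b3 a).
Definition Gbe (a : A2) := atan ((b3 a * cos (th1 a)) / (b0 a * cos (th2 a))).
Definition Gr (a : A2) : R * R * R :=
  ((th1 a + u - (th2 a + v)) / 2, Gbe a, (th1 a + u + (th2 a + v)) / 2).
Definition psi0' (p : R * R * R) := psi0 p.1.1 p.1.2 p.2.
Definition Puv (p : R * R * R) := cos (p.1.1 + p.2 - u) * cos (p.2 - p.1.1 - v).

Lemma Gr_sd (a : A2) : let p := Gr a in
  p.1.1 + p.2 = th1 a + u /\ p.2 - p.1.1 = th2 a + v.
Proof. by rewrite /Gr /=; split; field. Qed.

Lemma Puv_Gr (a : A2) : 0 < Puv (Gr a).
Proof.
have [h1 h2] := Gr_sd a; rewrite /Puv h1 h2 !addrK.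
by rewrite mulr_gt0 // cos_atan_gt0.
Qed.

Lemma coN (a : A2) k : co (- a) k = - co a k.
Proof. by rewrite /co mxE. Qed.

Lemma Gr_N (a : A2) : Gr (- a) = Gr a.
Proof.
have e0 : b0 (- a) = - b0 a by rewrite /b0 !coN; ring.
have e1 : b1 (- a) = - b1 a by rewrite /b1 !coN; ring.
have e2 : b2 (- a) = - b2 a by rewrite /b2 !coN; ring.
have e3 : b3 (- a) = - b3 a by rewrite /b3 !coN; ring.
have t1 : th1 (- a) = th1 a by rewrite /th1 e0 e1 divrNN.
have t2 : th2 (- a) = th2 a by rewrite /th2 e2 e3 divrNN.
rewrite /Gr /Gbe t1 t2 e0 e3 (mulNr (b3 a)) (mulNr (b0 a)) divrNN //.
Qed.

Lemma chart_id (a : A2) : anorm a = 1 -> b0 a != 0 -> b3 a != 0 ->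
  exists e : R, (e = 1 \/ e = -1) /\ psi0' (Gr a) = e *: a.
Proof.
move=> /anormE na nb0 nb3.
set x0 := b0 a; set x1 := b1 a; set x2 := b2 a; set x3 := b3 a.
have nx0 : x0 != 0 := nb0.
have nx3 : x3 != 0 := nb3.
have S0 : x0 ^+ 2 + x1 ^+ 2 = co a 0 ^+ 2 + co a 1 ^+ 2 by apply: rot_sq; rewrite cos2Dsin2.
have S1 : x3 ^+ 2 + x2 ^+ 2 = co a 3 ^+ 2 + co a 2 ^+ 2 by apply: rot_sq; rewrite cos2Dsin2.
set c1 := cos (th1 a); set c2 := cos (th2 a).
set t := (x3 * c1) / (x0 * c2).
have c1p : 0 < c1 by apply: cos_atan_gt0.
have c2p : 0 < c2 by apply: cos_atan_gt0.
have nc1 : c1 != 0 := lt0r_neq0 c1p.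
have nc2 : c2 != 0 := lt0r_neq0 c2p.
have cBp : 0 < cos (Gbe a) by apply: cos_atan_gt0.
have hc1 := cos_atan_sq (x1 / x0); rewrite -/(th1 a) -/c1 in hc1.
have hc2 := cos_atan_sq (x2 / x3); rewrite -/(th2 a) -/c2 in hc2.
have hcB := cos_atan_sq t; rewrite -/(Gbe a) in hcB.
have hs1 : sin (th1 a) = x1 / x0 * c1 by apply: sin_atan.
have hs2 : sin (th2 a) = x2 / x3 * c2 by apply: sin_atan.
have hsB : sin (Gbe a) = t * cos (Gbe a) by apply: sin_atan.
set cB := cos (Gbe a).
have nS0 : x0 ^+ 2 + x1 ^+ 2 != 0.
  apply: lt0r_neq0; have := sqr_pos nb0; have := sqr_ge0 x1.
  move: (x0 ^+ 2) (x1 ^+ 2) => p q; lra.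
have nS1 : x3 ^+ 2 + x2 ^+ 2 != 0.
  apply: lt0r_neq0; have := sqr_pos nb3; have := sqr_ge0 x2.
  move: (x3 ^+ 2) (x2 ^+ 2) => p q; lra.
have c1sq : c1 ^+ 2 = x0 ^+ 2 / (x0 ^+ 2 + x1 ^+ 2).
  by apply: (mulIf nS0); rewrite divfK //; rewrite -[RHS]mul1r -hc1; field.
have c2sq : c2 ^+ 2 = x3 ^+ 2 / (x3 ^+ 2 + x2 ^+ 2).
  apply: (mulIf nS1); rewrite divfK //; rewrite -[RHS]mul1r -hc2; field.
  exact: nb3.
have tsq : t ^+ 2 = (x3 ^+ 2 + x2 ^+ 2) / (x0 ^+ 2 + x1 ^+ 2).
  rewrite /t expr_div_n !exprMn c1sq c2sq; field.
  by rewrite nS0 nS1 nb0 nb3.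
have Ssum : (x0 ^+ 2 + x1 ^+ 2) + (x3 ^+ 2 + x2 ^+ 2) = 1 by rewrite S0 S1 -na; ring.
have cBsq : cB ^+ 2 = x0 ^+ 2 + x1 ^+ 2.
  move: hcB; rewrite tsq => hcB.
  have : cB ^+ 2 * ((x0 ^+ 2 + x1 ^+ 2 + (x3 ^+ 2 + x2 ^+ 2)) / (x0 ^+ 2 + x1 ^+ 2)) = 1.
    by rewrite -hcB; congr (_ * _); field.
  rewrite Ssum mul1r => h; apply: (mulIf (invr_neq0 nS0)); by rewrite h mulfV.
have cBc1 : (cB * c1) ^+ 2 = x0 ^+ 2.
  by rewrite exprMn cBsq c1sq; field.
have [e [he eX]] := sq_eq_pm cBc1.
exists e; split => //.
have [hsd1 hsd2] := Gr_sd a.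
have sBc2 : sin (Gbe a) * c2 = e * x3.
  rewrite hsB /t -/cB; have -> : x3 * c1 / (x0 * c2) * cB * c2 = x3 * (cB * c1) / x0.
      by field; rewrite nx0 nc2.
  by rewrite eX; field; rewrite ?nx0.
have cu := cos2Dsin2 u; have cv := cos2Dsin2 v.
rewrite /psi0' psi0E hsd1 hsd2 /psiR [in RHS](A2_eta a) mkAZ; congr mkA.
- rewrite cosD hs1 -/cB; have -> : cB * (c1 * cos u - x1 / x0 * c1 * sin u) = (cB * c1) * (cos u - x1 / x0 * sin u) by ring.
  rewrite eX; have -> : e * x0 * (cos u - x1 / x0 * sin u) = e * (x0 * cos u - x1 * sin u) by field; rewrite ?nx0 ?nx3.
  by rewrite /x0 /x1 /b0 /b1 rot_inv.
- rewrite sinD hs1 -/cB; have -> : cB * (x1 / x0 * c1 * cos u + c1 * sin u) = (cB * c1) * (x1 / x0 * cos u + sin u) by ring.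
  rewrite eX; have -> : e * x0 * (x1 / x0 * cos u + sin u) = e * (x0 * sin u + x1 * cos u) by field; rewrite ?nx0 ?nx3.
  by rewrite /x0 /x1 /b0 /b1 rot_inv2.
- rewrite sinD hs2; have -> : sin (Gbe a) * (x2 / x3 * c2 * cos v + c2 * sin v) = (sin (Gbe a) * c2) * (x2 / x3 * cos v + sin v) by ring.
  rewrite sBc2; have -> : e * x3 * (x2 / x3 * cos v + sin v) = e * (x3 * sin v + x2 * cos v) by field; rewrite ?nx0 ?nx3.
  by rewrite /x3 /x2 /b3 /b2 rot_inv2.
- rewrite cosD hs2; have -> : sin (Gbe a) * (c2 * cos v - x2 / x3 * c2 * sin v) = (sin (Gbe a) * c2) * (cos v - x2 / x3 * sin v) by ring.
  rewrite sBc2; have -> : e * x3 * (cos v - x2 / x3 * sin v) = e * (x3 * cos v - x2 * sin v) by field; rewrite ?nx0 ?nx3.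
  by rewrite /x3 /x2 /b3 /b2 rot_inv.
Qed.

Lemma Gr_reg (a : A2) : b0 a != 0 -> b3 a != 0 -> sin (2 * (Gr a).1.2) != 0.
Proof.
move=> nb0 nb3; rewrite /= mulr_natl sin_mulr2n sin_atan -mulr_natl.
have cp := cos_atan_gt0 ((b3 a * cos (th1 a)) / (b0 a * cos (th2 a))).
rewrite -/(Gbe a) in cp *.
have n1 := lt0r_neq0 (cos_atan_gt0 (b1 a / b0 a)).
have n2 := lt0r_neq0 (cos_atan_gt0 (b2 a / b3 a)).
have nB := lt0r_neq0 cp.
rewrite !mulf_neq0 // ?invr_neq0 // ?mulf_neq0 //.
Qed.

Lemma b0_psi (p : R * R * R) : b0 (psi0' p) = cos p.1.2 * cos (p.1.1 + p.2 - u).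
Proof. by rewrite /b0 /psi0' psi0E /psiR !coE (cosB (p.1.1 + p.2) u); ring. Qed.
Lemma b3_psi (p : R * R * R) : b3 (psi0' p) = sin p.1.2 * cos (p.2 - p.1.1 - v).
Proof. by rewrite /b3 /psi0' psi0E /psiR !coE (cosB (p.2 - p.1.1) v); ring. Qed.

End G.

Section G2.
Variable R : realType.
Local Notation PI := (trigo.pi : R).
Local Notation A2 := 'rV[R]_4.

Lemma reg_cs (be : R) : sin (2 * be) != 0 -> cos be != 0 /\ sin be != 0.
Proof. exact: sin2_neq0. Qed.

Lemma psi_U (p : R * R * R) : sin (2 * p.1.2) != 0 -> Uset (psi0' p).
Proof.
move=> /reg_cs [c0 s0]; rewrite /Uset /psi0' psi0E /psiR /in_A1 /in_A1e2 /=.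
rewrite !coE; split; [|split].
- apply: anorm_mkA.
  have -> : forall (c s x y z w : R), (c * x) ^+ 2 + (c * y) ^+ 2 + (s * z) ^+ 2 + (s * w) ^+ 2 =
     c ^+ 2 * (x ^+ 2 + y ^+ 2) + s ^+ 2 * (w ^+ 2 + z ^+ 2) by move=> *; ring.
  by rewrite !cos2Dsin2 !mulr1 cos2Dsin2.
- move=> [/eqP h1 /eqP h2]; move: h1 h2; rewrite !mulf_eq0 (negbTE c0) /= => /eqP h1 /eqP h2.
  by have := cos2Dsin2 (p.1.1 + p.2); rewrite h1 h2 expr0n /= addr0 => /eqP; rewrite eq_sym oner_eq0.
- move=> [/eqP h1 /eqP h2]; move: h1 h2; rewrite !mulf_eq0 (negbTE s0) /= => /eqP h1 /eqP h2.
  by have := cos2Dsin2 (p.2 - p.1.1); rewrite h1 h2 expr0n /= addr0 => /eqP; rewrite eq_sym oner_eq0.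
Qed.

Lemma Uset_N (a : A2) : Uset a -> Uset (- a).
Proof.
rewrite /Uset /in_A1 /in_A1e2 /= !coN => -[na [h1 h2]]; split; [|split].
- move: na; rewrite /anorm; congr (Num.sqrt _ = _); apply: eq_bigr => i _.
  by rewrite mxE sqrrN.
- by move=> [/eqP]; rewrite oppr_eq0 => /eqP a0 /eqP; rewrite oppr_eq0 => /eqP a1; apply: h1.
- by move=> [/eqP]; rewrite oppr_eq0 => /eqP a0 /eqP; rewrite oppr_eq0 => /eqP a1; apply: h2.
Qed.

Definition sh (p : R * R * R) : R * R * R := (p.1.1 + PI / 2, - p.1.2, p.2 + PI / 2).
Definition addk (p : R * R * R) (k1 k2 k3 : int) : R * R * R :=
  (p.1.1 + k1%:~R * PI, p.1.2 + k2%:~R * PI, p.2 + k3%:~R * PI).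

Lemma psi_sh (p : R * R * R) : psi0' (sh p) = - psi0' p.
Proof.
rewrite /psi0' /sh /= !psi0E /psiR mkAN cosN sinN.
have -> : p.1.1 + PI / 2 + (p.2 + PI / 2) = (p.1.1 + p.2) + PI by field.
have -> : p.2 + PI / 2 - (p.1.1 + PI / 2) = p.2 - p.1.1 by field.
by rewrite cosDpi sinDpi; congr mkA; ring.
Qed.

Lemma psi_addk (p : R * R * R) k1 k2 k3 :
  psi0' (addk p k1 k2 k3) = ((-1) ^ (k1 + k2 + k3)) *: psi0' p.
Proof.
rewrite /psi0' /addk /= !psi0E /psiR mkAZ.
have -> : p.1.1 + k1%:~R * PI + (p.2 + k3%:~R * PI) = (p.1.1 + p.2) + (k1 + k3)%:~R * PI.
  by rewrite intrD mulrDl; ring.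
have -> : p.2 + k3%:~R * PI - (p.1.1 + k1%:~R * PI) = (p.2 - p.1.1) + (k3 - k1)%:~R * PI.
  by rewrite intrB mulrBl; ring.
rewrite !cosDk !sinDk !N1zD N1zN.
have h := N1z_sq R k1; have h3 := N1z_sq R k3.
congr mkA.
- ring.
- ring.
- have -> : (-1 : R) ^ k3 * (-1) ^ k1 = (-1) ^ k1 * (-1) ^ k3 by ring. ring.
- have -> : (-1 : R) ^ k3 * (-1) ^ k1 = (-1) ^ k1 * (-1) ^ k3 by ring. ring.
Qed.

Lemma sin2_addk (be : R) (k : int) : sin (2 * (be + k%:~R * PI)) = sin (2 * be).
Proof.
have -> : 2 * (be + k%:~R * PI) = 2 * be + (k * 2)%:~R * PI by rewrite intrM; ring.
by rewrite sinDk N1z2 mul1r.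
Qed.

Lemma sin2_N (be : R) : sin (2 * (- be)) = - sin (2 * be).
Proof. by rewrite mulrN sinN. Qed.

Lemma Puv_addk (u v : R) p k1 k2 k3 : Puv u v (addk p k1 k2 k3) = Puv u v p.
Proof.
rewrite /Puv /addk /=.
have -> : p.1.1 + k1%:~R * PI + (p.2 + k3%:~R * PI) - u = (p.1.1 + p.2 - u) + (k1 + k3)%:~R * PI.
  by rewrite intrD mulrDl; ring.
have -> : p.2 + k3%:~R * PI - (p.1.1 + k1%:~R * PI) - v = (p.2 - p.1.1 - v) + (k3 - k1)%:~R * PI.
  by rewrite intrB mulrBl; ring.
rewrite !cosDk N1zD -[k3 - k1]/(k3 + - k1) N1zD N1zN.
have h := N1z_sq R k1; have h3 := N1z_sq R k3.
have -> : (-1) ^ k1 * (-1) ^ k3 * cos (p.1.1 + p.2 - u) * ((-1) ^ k3 * (-1) ^ k1 * cos (p.2 - p.1.1 - v))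
  = ((-1) ^ k1 * (-1) ^ k1) * ((-1) ^ k3 * (-1) ^ k3) * (cos (p.1.1 + p.2 - u) * cos (p.2 - p.1.1 - v)) by ring.
by rewrite h h3 !mul1r.
Qed.

Lemma Puv_sh (u v : R) p : Puv u v (sh p) = - Puv u v p.
Proof.
rewrite /Puv /sh /=.
have -> : p.1.1 + PI / 2 + (p.2 + PI / 2) - u = (p.1.1 + p.2 - u) + PI by field.
have -> : p.2 + PI / 2 - (p.1.1 + PI / 2) - v = p.2 - p.1.1 - v by field.
by rewrite cosDpi mulNr.
Qed.

Lemma sh_addk p k1 k2 k3 : sh (addk p k1 k2 k3) = addk (sh p) k1 (- k2) k3.
Proof.
rewrite /sh /addk /=; congr (_, _, _).
- ring.
- by rewrite intrN mulNr opprD.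
- ring.
Qed.

End G2.

Section T.
Variable R : realType.
Local Notation PI := (trigo.pi : R).
Local Notation A2 := 'rV[R]_4.
Local Notation T3 := (Torus3 R).
Local Notation RQ := (Rmodpi R).
Local Notation AQ := (A2pm R).

Lemma piR_eq (x y : R) : \pi_RQ x = \pi_RQ y <-> mpi x y.
Proof.
split => [/eqmodP|h]; first by move/modpiP.
by apply/eqmodP; apply/modpiP.
Qed.

Lemma piA_eq (a b : A2) : \pi_AQ a = \pi_AQ b <-> a = b \/ a = - b.
Proof.
split => [/eqmodP|h].
- by rewrite /= /pmrel => /orP[]/eqP; auto.
- by apply/eqmodP; rewrite /= /pmrel; case: h => ->; rewrite eqxx ?orbT.
Qed.

Lemma openRE (U : set RQ) : open U = open (\pi_RQ @^-1` U).
Proof. by []. Qed.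

Lemma openAE (U : set AQ) : open U = open (\pi_AQ @^-1` U).
Proof. by []. Qed.

Lemma reprR (x : R) : exists k : int, repr (\pi_RQ x) = x + k%:~R * PI.
Proof.
have : \pi_RQ (repr (\pi_RQ x)) = \pi_RQ x by rewrite reprK.
by move/piR_eq => [k hk]; exists k; rewrite -hk addrC subrK.
Qed.

Definition Phi (p : R * R * R) : T3 := (\pi_RQ p.1.1, \pi_RQ p.1.2, \pi_RQ p.2).
Definition rep3 (x : T3) : R * R * R := (repr x.1.1, repr x.1.2, repr x.2).

Lemma Phi_rep3 (x : T3) : Phi (rep3 x) = x.
Proof. by case: x => [[a b] c]; rewrite /Phi /rep3 /= !reprK. Qed.

Lemma rep3_Phi p : exists k1 k2 k3, rep3 (Phi p) = addk p k1 k2 k3.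
Proof.
have [k1 h1] := reprR p.1.1; have [k2 h2] := reprR p.1.2; have [k3 h3] := reprR p.2.
by exists k1, k2, k3; rewrite /rep3 /Phi /addk /= h1 h2 h3.
Qed.

Lemma Phi_mpi p q : mpi p.1.1 q.1.1 -> mpi p.1.2 q.1.2 -> mpi p.2 q.2 -> Phi p = Phi q.
Proof. by move=> /piR_eq h1 /piR_eq h2 /piR_eq h3; rewrite /Phi h1 h2 h3. Qed.

Lemma Phi_addk p k1 k2 k3 : Phi (addk p k1 k2 k3) = Phi p.
Proof.
apply: Phi_mpi; rewrite /addk /=.
- by exists k1; rewrite addrC addKr.
- by exists k2; rewrite addrC addKr.
- by exists k3; rewrite addrC addKr.
Qed.

Lemma reprA (a : A2) : repr (\pi_AQ a) = a \/ repr (\pi_AQ a) = - a.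
Proof. by apply/piA_eq; rewrite reprK. Qed.

Lemma piA_N (a : A2) : \pi_AQ (- a) = \pi_AQ a.
Proof. by apply/piA_eq; right. Qed.

Lemma piA_scale (e : R) (a : A2) : e = 1 \/ e = -1 -> \pi_AQ (e *: a) = \pi_AQ a.
Proof. by case=> ->; rewrite ?scale1r // scaleN1r piA_N. Qed.

Lemma PsiE (x : T3) : Psi x = \pi_AQ (psi0' (rep3 x)).
Proof. by []. Qed.

Lemma Psi_Phi p : Psi (Phi p) = \pi_AQ (psi0' p).
Proof.
have [k1 [k2 [k3 h]]] := rep3_Phi p.
by rewrite PsiE h psi_addk piA_scale //; exact: N1z_pm.
Qed.

Lemma reg3E (x : T3) : reg3 x <-> sin (2 * (rep3 x).1.2) != 0.
Proof. by []. Qed.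

Lemma reg3_Phi p : reg3 (Phi p) <-> sin (2 * p.1.2) != 0.
Proof.
have [k1 [k2 [k3 h]]] := rep3_Phi p.
by rewrite reg3E h /addk /= sin2_addk.
Qed.

Lemma shift3E (x : T3) : shift3 x = Phi (sh (rep3 x)).
Proof. by []. Qed.

Lemma shift3_Phi p : shift3 (Phi p) = Phi (sh p).
Proof.
have [k1 [k2 [k3 h]]] := rep3_Phi p.
by rewrite shift3E h sh_addk Phi_addk.
Qed.

Lemma shift3K (x : T3) : shift3 (shift3 x) = x.
Proof.
rewrite (shift3E x) shift3_Phi -[RHS]Phi_rep3; apply: Phi_mpi; rewrite /sh /=.
- by exists 1; rewrite mul1r; field.
- by exists 0; rewrite mul0r opprK subrr.
- by exists 1; rewrite mul1r; field.
Qed.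

Lemma fiber (x y : T3) : reg3 x -> reg3 y -> Psi y = Psi x -> y = x \/ y = shift3 x.
Proof.
move=> /reg3E rx /reg3E ry; rewrite !PsiE => /piA_eq he.
have [e [pe E]] : exists e : R, (e = 1 \/ e = -1) /\ psi0' (rep3 y) = e *: psi0' (rep3 x).
  by case: he => ->; [exists 1; rewrite scale1r | exists (-1); rewrite scaleN1r]; split; auto.
case: (fiberR pe rx ry E) => [[h1 [h2 h3]]|[h1 [h2 h3]]].
- by left; rewrite -(Phi_rep3 y) -(Phi_rep3 x); apply: Phi_mpi.
- by right; rewrite -(Phi_rep3 y) shift3E; apply: Phi_mpi.
Qed.

Lemma part2 (x : T3) : reg3 x ->
  [set y | reg3 y /\ Psi y = Psi x] = [set x; shift3 x].
Proof.
move=> rx; apply/seteqP; split => y /=.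
- by move=> [ry hy]; case: (fiber rx ry hy) => ->; [left|right].
- case=> ->; first by split.
  rewrite shift3E; split.
  + by apply/reg3_Phi; rewrite /sh /= sin2_N oppr_eq0.
  + by rewrite Psi_Phi psi_sh piA_N.
Qed.

End T.

Section T2.
Variable R : realType.
Local Notation PI := (trigo.pi : R).
Local Notation A2 := 'rV[R]_4.
Local Notation T3 := (Torus3 R).
Local Notation RQ := (Rmodpi R).
Local Notation AQ := (A2pm R).

Lemma piR_cont : continuous (\pi_RQ : R -> RQ).
Proof. exact: (@pi_continuous R RQ). Qed.

Lemma piA_cont : continuous (\pi_AQ : A2 -> AQ).
Proof. exact: (@pi_continuous _ AQ). Qed.

Lemma fst1_cont : continuous (fun p : R * R * R => p.1.1).
Proof. move=> p; apply: (@cvg_comp _ _ _ fst fst _ (nbhs p.1)); exact: cvg_fst. Qed.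
Lemma fst2_cont : continuous (fun p : R * R * R => p.1.2).
Proof. move=> p; apply: (@cvg_comp _ _ _ fst snd _ (nbhs p.1)); [exact: cvg_fst | exact: cvg_snd]. Qed.
Lemma snd_cont : continuous (fun p : R * R * R => p.2).
Proof. move=> p; exact: cvg_snd. Qed.

Lemma pair_cont {T U V : topologicalType} (f : T -> U) (g : T -> V) x :
  {for x, continuous f} -> {for x, continuous g} -> {for x, continuous (fun y => (f y, g y))}.
Proof.
move=> hf hg A hA.
exact: (@cvg_pair _ _ _ (nbhs x) (nbhs (f x)) (nbhs (g x)) _ _ _ f g hf hg A hA).
Qed.

Lemma Phi_cont : continuous (@Phi R).
Proof.
move=> p; apply: pair_cont; first apply: pair_cont.
- exact: (continuous_comp (@fst1_cont p) (@piR_cont _)).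
- exact: (continuous_comp (@fst2_cont p) (@piR_cont _)).
- exact: (continuous_comp (@snd_cont p) (@piR_cont _)).
Qed.

Lemma transl_cont (c : R) : continuous (fun y : R => y + c).
Proof. by move=> y; apply: cvgD; [exact: cvg_id | exact: cvg_cst]. Qed.

Lemma piR_open (U : set R) : open U -> open (\pi_RQ @` U).
Proof.
move=> oU; rewrite openRE.
have -> : \pi_RQ @^-1` (\pi_RQ @` U) =
  \bigcup_(k in [set: int]) ((fun y => y + k%:~R * PI) @^-1` U).
  apply/seteqP; split => y /=.
  - move=> [x Ux /piR_eq [k hk]]; exists k => //=.
    by have -> : y + k%:~R * PI = x by rewrite -hk addrC subrK.
  - move=> [k _ /= hk]; exists (y + k%:~R * PI) => //.
    by apply/piR_eq; exists k; rewrite addrC addKr.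
apply: bigcup_open => k _.
by move/continuousP: (@transl_cont (k%:~R * PI)); apply.
Qed.

Lemma Phi_open (O : set (R * R * R)) : open O -> open (@Phi R @` O).
Proof.
rewrite !openE => oO _ [p Op <-].
have := oO p Op; case=> [[P Q] /= [hP hQ] hPQ].
case: hP => [[P1 P2] /= [h1 h2] hP12].
have o1 : open (\pi_RQ @` P1°) by apply: piR_open; exact: open_interior.
have o2 : open (\pi_RQ @` P2°) by apply: piR_open; exact: open_interior.
have o3 : open (\pi_RQ @` Q°) by apply: piR_open; exact: open_interior.
exists ((\pi_RQ @` P1°) `*` (\pi_RQ @` P2°), \pi_RQ @` Q°) => /=.
  split.
  - exists (\pi_RQ @` P1°, \pi_RQ @` P2°) => //=; split.
    + by apply: open_nbhs_nbhs; split => //; exists p.1.1.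
    + by apply: open_nbhs_nbhs; split => //; exists p.1.2.
  - by apply: open_nbhs_nbhs; split => //; exists p.2.
move=> [[a b] c] /= [[[a' ha' <-] [b' hb' <-]] [c' hc' <-]].
exists ((a', b'), c') => //.
apply: hPQ; split => /=; last exact: interior_subset.
by apply: hP12; split; exact: interior_subset.
Qed.

Lemma T3_open (N : set T3) : open (@Phi R @^-1` N) -> open N.
Proof.
move=> h.
have -> : N = @Phi R @` (@Phi R @^-1` N).
  apply/seteqP; split => x.
  - by move=> Nx; exists (rep3 x); rewrite /= Phi_rep3.
  - by move=> [q Nq <-].
exact: Phi_open.
Qed.

Section RealCont.
Context {T : topologicalType}.
Implicit Types (f g : T -> R) (x : T).
Lemma cosc f x : {for x, continuous f} -> {for x, continuous (fun y => cos (f y))}.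
Proof. by move=> h; apply: (continuous_comp h); exact: continuous_cos. Qed.
Lemma sinc f x : {for x, continuous f} -> {for x, continuous (fun y => sin (f y))}.
Proof. by move=> h; apply: (continuous_comp h); exact: continuous_sin. Qed.
Lemma atanc f x : {for x, continuous f} -> {for x, continuous (fun y => atan (f y))}.
Proof. by move=> h; apply: (continuous_comp h); exact: continuous_atan. Qed.
Lemma addc f g x : {for x, continuous f} -> {for x, continuous g} -> {for x, continuous (fun y => f y + g y)}.
Proof. by move=> h1 h2; exact: (continuousD h1 h2). Qed.
Lemma oppc f x : {for x, continuous f} -> {for x, continuous (fun y => - f y)}.
Proof. by move=> h; exact: (cvgN h). Qed.
Lemma subc f g x : {for x, continuous f} -> {for x, continuous g} -> {for x, continuous (fun y => f y - g y)}.
Proof. by move=> h1 h2; apply: addc => //; exact: oppc. Qed.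
Lemma mulc f g x : {for x, continuous f} -> {for x, continuous g} -> {for x, continuous (fun y => f y * g y)}.
Proof. by move=> h1 h2; exact: (continuousM h1 h2). Qed.
Lemma invc f x : f x != 0 -> {for x, continuous f} -> {for x, continuous (fun y => (f y)^-1)}.
Proof. by move=> h0 h; exact: (continuousV h0 h). Qed.
Lemma divc f g x : g x != 0 -> {for x, continuous f} -> {for x, continuous g} -> {for x, continuous (fun y => f y / g y)}.
Proof. by move=> h0 h1 h2; apply: mulc => //; exact: invc. Qed.
Lemma cstc (c : R) x : {for x, continuous (fun _ : T => c)}.
Proof. exact: cvg_cst. Qed.
Lemma divc2 f x : {for x, continuous f} -> {for x, continuous (fun y => f y / 2)}.
Proof. by move=> h; apply: divc => //; exact: cstc. Qed.
Lemma scalc f (w : A2) x : {for x, continuous f} -> {for x, continuous (fun y => f y *: w)}.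
Proof. by move=> h; exact: (cvgZr_tmp h). Qed.
Lemma addAc (f g : T -> A2) x : {for x, continuous f} -> {for x, continuous g} -> {for x, continuous (fun y => f y + g y)}.
Proof. by move=> h1 h2; exact: (continuousD h1 h2). Qed.
End RealCont.

Lemma mkA_cont {T : topologicalType} (f g h k : T -> R) x :
  {for x, continuous f} -> {for x, continuous g} -> {for x, continuous h} -> {for x, continuous k} ->
  {for x, continuous (fun y => mkA (f y) (g y) (h y) (k y))}.
Proof.
move=> hf hg hh hk.
have -> : (fun y => mkA (f y) (g y) (h y) (k y)) =
  (fun y => f y *: aone R + g y *: e1 R + h y *: e2 R + k y *: e12 R).
  by apply/funext => y; rewrite mkAE.
by repeat apply: addAc; apply: scalc.
Qed.

Lemma psi0'_cont : continuous (@psi0' R).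
Proof.
move=> p.
have -> : @psi0' R = fun q => mkA (cos q.1.2 * cos (q.1.1 + q.2)) (cos q.1.2 * sin (q.1.1 + q.2))
   (sin q.1.2 * sin (q.2 - q.1.1)) (sin q.1.2 * cos (q.2 - q.1.1)).
  by apply/funext => q; rewrite /psi0' psi0E.
have c1 := @fst1_cont p; have c2 := @fst2_cont p; have c3 := @snd_cont p.
apply: (@mkA_cont _ (fun q => _) (fun q => _) (fun q => _) (fun q => _) p).
- exact: (mulc (cosc c2) (cosc (addc c1 c3))).
- exact: (mulc (cosc c2) (sinc (addc c1 c3))).
- exact: (mulc (sinc c2) (sinc (subc c3 c1))).
- exact: (mulc (sinc c2) (cosc (subc c3 c1))).
Qed.

Lemma Psi_cont : continuous (@Psi R).
Proof.
apply/continuousP => N oN; apply: T3_open.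
have -> : @Phi R @^-1` (@Psi R @^-1` N) = @psi0' R @^-1` (\pi_AQ @^-1` N).
  by apply/seteqP; split => p /=; rewrite Psi_Phi.
by move/continuousP: psi0'_cont; apply; rewrite -openAE.
Qed.

Lemma co_cont k : continuous (fun a : A2 => co a k).
Proof. move=> a; exact: (@coord_continuous R 1 4 ord0 (inord k) a). Qed.

Lemma b0_cont (u : R) (a : A2) : {for a, continuous (b0 u)}.
Proof. exact: (addc (mulc (@cstc _ _ _) (@co_cont 0 a)) (mulc (@cstc _ _ _) (@co_cont 1 a))). Qed.
Lemma b1_cont (u : R) (a : A2) : {for a, continuous (b1 u)}.
Proof. exact: (addc (mulc (@cstc _ _ _) (@co_cont 0 a)) (mulc (@cstc _ _ _) (@co_cont 1 a))). Qed.
Lemma b3_cont (v : R) (a : A2) : {for a, continuous (b3 v)}.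
Proof. exact: (addc (mulc (@cstc _ _ _) (@co_cont 3 a)) (mulc (@cstc _ _ _) (@co_cont 2 a))). Qed.
Lemma b2_cont (v : R) (a : A2) : {for a, continuous (b2 v)}.
Proof. exact: (addc (mulc (@cstc _ _ _) (@co_cont 3 a)) (mulc (@cstc _ _ _) (@co_cont 2 a))). Qed.

Lemma th1_cont (u : R) (a : A2) : b0 u a != 0 -> {for a, continuous (th1 u)}.
Proof. by move=> h; exact: (atanc (divc h (@b1_cont u a) (@b0_cont u a))). Qed.
Lemma th2_cont (v : R) (a : A2) : b3 v a != 0 -> {for a, continuous (th2 v)}.
Proof. by move=> h; exact: (atanc (divc h (@b2_cont v a) (@b3_cont v a))). Qed.

Lemma Gbe_cont (u v : R) (a : A2) : b0 u a != 0 -> b3 v a != 0 -> {for a, continuous (Gbe u v)}.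
Proof.
move=> h0 h3; apply: atanc; apply: divc.
- rewrite mulf_neq0 //; exact: (lt0r_neq0 (cos_atan_gt0 _)).
- exact: (mulc (@b3_cont v a) (cosc (@th1_cont u a h0))).
- exact: (mulc (@b0_cont u a) (cosc (@th2_cont v a h3))).
Qed.

Lemma Gr_cont (u v : R) (a : A2) : b0 u a != 0 -> b3 v a != 0 -> {for a, continuous (Gr u v)}.
Proof.
move=> h0 h3; apply: pair_cont; first apply: pair_cont.
- exact: (divc2 (subc (addc (@th1_cont u a h0) (@cstc _ u a)) (addc (@th2_cont v a h3) (@cstc _ v a)))).
- exact: Gbe_cont.
- exact: (divc2 (addc (addc (@th1_cont u a h0) (@cstc _ u a)) (addc (@th2_cont v a h3) (@cstc _ v a)))).
Qed.

Lemma sh_cont : continuous (@sh R).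
Proof.
move=> p; rewrite /sh; apply: (@pair_cont _ _ _ (fun q : R * R * R => (q.1.1 + PI / 2, - q.1.2)) (fun q : R * R * R => q.2 + PI / 2) p); first apply: pair_cont.
- exact: (addc (@fst1_cont p) (@cstc _ _ p)).
- exact: (oppc (@fst2_cont p)).
- exact: (addc (@snd_cont p) (@cstc _ _ p)).
Qed.

Lemma chart_cont (Vt : set A2) (G : A2 -> T3) : open Vt ->
  (forall a, Vt a -> Vt (- a)) -> (forall a, G (- a) = G a) -> {in Vt, continuous G} ->
  {in \pi_AQ @` Vt, continuous (fun z : AQ => G (repr z))}.
Proof.
move=> oV sV eG cG z; rewrite inE => -[a Va <-].
have Vr : Vt (repr (\pi_AQ a)) by case: (reprA a) => ->; [|apply: sV].
move=> N /=; rewrite nbhsE => -[N0 [oN0 N0r] N0N].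
have oVG : open (Vt `&` G @^-1` N0) by move/continuous_inP: cG; apply.
have oM : open (\pi_AQ @` (Vt `&` G @^-1` N0)).
  rewrite openAE; have -> : \pi_AQ @^-1` (\pi_AQ @` (Vt `&` G @^-1` N0)) = Vt `&` G @^-1` N0 => //.
  apply/seteqP; split => b /=.
  - move=> [c [Vc Nc] /piA_eq [E|E]]; first by rewrite -E.
    by rewrite -[b]opprK -E eG; split => //; apply: sV.
  - by move=> h; exists b.
apply: (@filterS _ _ _ (\pi_AQ @` (Vt `&` G @^-1` N0))).
  move=> w [c [Vc Nc] <-] /=; apply: N0N.
  by case: (reprA c) => ->; rewrite ?eG.
apply: open_nbhs_nbhs; split => //.
by exists (repr (\pi_AQ a)); [split | rewrite reprK].
Qed.

End T2.

Section M.
Variable R : realType.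
Local Notation PI := (trigo.pi : R).
Local Notation A2 := 'rV[R]_4.
Local Notation T3 := (Torus3 R).
Local Notation RQ := (Rmodpi R).
Local Notation AQ := (A2pm R).

Lemma UquotE : @Uquot R = \pi_AQ @` (@Uset R).
Proof. by []. Qed.

Lemma choose_u (a : A2) : Uset a -> exists u, b0 u a != 0.
Proof.
move=> [_ [h1 _]]; case: (eqVneq (co a 0) 0) => h0.
- exists (PI / 2); rewrite /b0 cos_pihalf sin_pihalf mul0r add0r mul1r.
  by apply/eqP => h; apply: h1; split.
- by exists 0; rewrite /b0 cos0 sin0 mul0r addr0 mul1r.
Qed.

Lemma choose_v (a : A2) : Uset a -> exists v, b3 v a != 0.
Proof.
move=> [_ [_ h2]]; case: (eqVneq (co a 3) 0) => h0.
- exists (PI / 2); rewrite /b3 cos_pihalf sin_pihalf mul0r add0r mul1r.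
  by apply/eqP => h; apply: h2; split.
- by exists 0; rewrite /b3 cos0 sin0 mul0r addr0 mul1r.
Qed.

Lemma image_pt (u v : R) (a : A2) : Uset a -> b0 u a != 0 -> b3 v a != 0 ->
  reg3 (Phi (Gr u v a)) /\ Psi (Phi (Gr u v a)) = \pi_AQ a.
Proof.
move=> Ua h0 h3; split; first by apply/reg3_Phi; exact: Gr_reg.
have [e [he E]] := chart_id Ua.1 h0 h3.
by rewrite Psi_Phi E piA_scale.
Qed.

Lemma image_part : @Psi R @` @reg3 R = @Uquot R.
Proof.
apply/seteqP; split => y.
- move=> [x rx <-]; exists (psi0' (rep3 x)) => //.
  exact: psi_U.
- move=> [a Ua <-].
  have [u hu] := choose_u Ua; have [v hv] := choose_v Ua.
  have [r E] := image_pt Ua hu hv.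
  by exists (Phi (Gr u v a)).
Qed.

Section Local.
Variables u v : R.

Definition Vt : set A2 := [set a | b0 u a != 0 /\ b3 v a != 0].

Lemma b0N (a : A2) : b0 u (- a) = - b0 u a.
Proof. by rewrite /b0 !coN; ring. Qed.
Lemma b3N (a : A2) : b3 v (- a) = - b3 v a.
Proof. by rewrite /b3 !coN; ring. Qed.

Lemma Vt_N (a : A2) : Vt a -> Vt (- a).
Proof. by rewrite /Vt /= b0N b3N !oppr_eq0. Qed.

Lemma Vt_open : open Vt.
Proof.
have -> : Vt = (b0 u @^-1` [set x | x != 0]) `&` (b3 v @^-1` [set x | x != 0]) by [].
apply: openI.
- by move/continuousP: (@b0_cont R u); apply; exact: open_neq.
- by move/continuousP: (@b3_cont R v); apply; exact: open_neq.
Qed.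

Definition Vq : set AQ := \pi_AQ @` Vt.

Lemma Vq_pi (c : A2) : Vq (\pi_AQ c) <-> Vt c.
Proof.
split; last by exists c.
move=> [d Vd /piA_eq [E|E]]; first by rewrite -E.
by rewrite -[c]opprK -E; apply: Vt_N.
Qed.

Lemma Vq_open : open Vq.
Proof.
rewrite openAE; have -> : \pi_AQ @^-1` Vq = Vt; last exact: Vt_open.
by apply/seteqP; split => c /=; move/Vq_pi.
Qed.

Lemma Vq_repr (z : AQ) : Vq z -> Vt (repr z).
Proof. by rewrite -[z]reprK => /Vq_pi; rewrite reprK. Qed.

Lemma B_repr (z : AQ) : Uquot z -> Uset (repr z).
Proof.
move=> [a Ua <-]; case: (reprA a) => ->; first by [].
exact: Uset_N.
Qed.

Definition O1 : set T3 := @Phi R @` [set p | 0 < Puv u v p].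
Definition O2 : set T3 := @Phi R @` [set p | Puv u v p < 0].

Lemma Puv_cont : continuous (Puv u v).
Proof.
move=> p; have c1 := @fst1_cont R p; have c2 := @fst2_cont R p; have c3 := @snd_cont R p.
exact: (mulc (cosc (subc (addc c1 c3) (@cstc R _ u p)))
             (cosc (subc (subc c3 c1) (@cstc R _ v p)))).
Qed.

Lemma O1_open : open O1.
Proof. apply: Phi_open; have := @open_gt R 0; move/(proj1 (continuousP _) Puv_cont); exact. Qed.
Lemma O2_open : open O2.
Proof. apply: Phi_open; have := @open_lt R 0; move/(proj1 (continuousP _) Puv_cont); exact. Qed.

Lemma Puv_Phi p : Puv u v (rep3 (Phi p)) = Puv u v p.
Proof. by have [k1 [k2 [k3 ->]]] := rep3_Phi p; rewrite Puv_addk. Qed.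

Lemma O1E x : O1 x <-> 0 < Puv u v (rep3 x).
Proof.
split; first by move=> [p hp <-]; rewrite Puv_Phi.
by move=> h; exists (rep3 x) => //; rewrite Phi_rep3.
Qed.
Lemma O2E x : O2 x <-> Puv u v (rep3 x) < 0.
Proof.
split; first by move=> [p hp <-]; rewrite Puv_Phi.
by move=> h; exists (rep3 x) => //; rewrite Phi_rep3.
Qed.

Lemma VtE (x : T3) : reg3 x -> (Vt (psi0' (rep3 x)) <-> Puv u v (rep3 x) != 0).
Proof.
move=> /reg3E /reg_cs [c0 s0].
rewrite /Vt /= b0_psi b3_psi /Puv !mulf_eq0 (negbTE c0) (negbTE s0) /=.
by rewrite negb_or; split => [[-> ->]|/andP[]].
Qed.

Lemma inV (x : T3) : reg3 x -> (Vq (Psi x) <-> Puv u v (rep3 x) != 0).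
Proof. by move=> rx; rewrite PsiE Vq_pi; exact: VtE. Qed.

Definition g1 (z : AQ) : T3 := Phi (Gr u v (repr z)).
Definition g2 (z : AQ) : T3 := Phi (sh (Gr u v (repr z))).

Lemma g1_prop (z : AQ) : (Vq `&` @Uquot R) z -> (O1 `&` @reg3 R) (g1 z) /\ Psi (g1 z) = z.
Proof.
move=> [/Vq_repr [h0 h3] /B_repr Uc].
have [r E] := image_pt Uc h0 h3.
split; last by rewrite /g1 E reprK.
by split => //; exists (Gr u v (repr z)) => //=; exact: Puv_Gr.
Qed.

Lemma g2_prop (z : AQ) : (Vq `&` @Uquot R) z -> (O2 `&` @reg3 R) (g2 z) /\ Psi (g2 z) = z.
Proof.
move=> [/Vq_repr [h0 h3] /B_repr Uc].
have [/reg3_Phi r E] := image_pt Uc h0 h3.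
rewrite /g2; split; last by rewrite Psi_Phi psi_sh piA_N -Psi_Phi E reprK.
split.
- exists (sh (Gr u v (repr z))) => //=; rewrite Puv_sh oppr_lt0; exact: Puv_Gr.
- by apply/reg3_Phi; rewrite /sh /= sin2_N oppr_eq0.
Qed.

Lemma g_common (x : T3) : reg3 x -> Vq (Psi x) ->
  let x' := Phi (Gr u v (repr (Psi x))) in
  0 < Puv u v (rep3 x') /\ (x' = x \/ x' = shift3 x).
Proof.
move=> rx Vx x'.
have hGr : Gr u v (repr (Psi x)) = Gr u v (psi0' (rep3 x)).
  by rewrite PsiE; case: (reprA (psi0' (rep3 x))) => ->; rewrite ?Gr_N.
have Vc : Vt (psi0' (rep3 x)) by move: Vx; rewrite PsiE => /Vq_pi.
have Uc : Uset (psi0' (rep3 x)) by apply: psi_U; exact/reg3E.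
have [r E] := image_pt Uc Vc.1 Vc.2.
split; first by rewrite /x' Puv_Phi; exact: Puv_Gr.
have rx' : reg3 x' by rewrite /x' hGr.
have Px' : Psi x' = Psi x by rewrite /x' hGr E PsiE.
exact: fiber rx rx' Px'.
Qed.

Lemma Puv_shift (x : T3) : Puv u v (rep3 (shift3 x)) = - Puv u v (rep3 x).
Proof. by rewrite shift3E Puv_Phi Puv_sh. Qed.

Lemma g1_inv (x : T3) : (O1 `&` @reg3 R) x -> g1 (Psi x) = x.
Proof.
move=> [/O1E p1 rx].
have Vx : Vq (Psi x) by apply/inV => //; rewrite gt_eqF.
have [p' [E|E]] := g_common rx Vx; first exact: E.
move: p'; rewrite E Puv_shift oppr_gt0 => h.
by have := lt_trans h p1; rewrite ltxx.
Qed.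

Lemma g2_inv (x : T3) : (O2 `&` @reg3 R) x -> g2 (Psi x) = x.
Proof.
move=> [/O2E p2 rx].
have Vx : Vq (Psi x) by apply/inV => //; rewrite lt_eqF.
have [p' [E|E]] := g_common rx Vx.
- move: p'; rewrite E => h.
  by have := lt_trans h p2; rewrite ltxx.
- by rewrite /g2 -shift3_Phi E shift3K.
Qed.

Lemma g1_cont : {within Vq `&` @Uquot R, continuous g1}.
Proof.
apply: continuous_in_subspaceT => z; rewrite inE => -[Vz _].
have := @chart_cont R Vt (fun a => Phi (Gr u v a)) Vt_open Vt_N.
move=> /(_ (fun a => congr1 (@Phi R) (Gr_N u v a))).
apply.
- move=> a; rewrite inE => -[h0 h3].
  exact: (continuous_comp (Gr_cont h0 h3) (@Phi_cont R _)).
- by rewrite inE.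
Qed.

Lemma g2_cont : {within Vq `&` @Uquot R, continuous g2}.
Proof.
apply: continuous_in_subspaceT => z; rewrite inE => -[Vz _].
have := @chart_cont R Vt (fun a => Phi (sh (Gr u v a))) Vt_open Vt_N.
move=> /(_ (fun a => congr1 (fun q => Phi (sh q)) (Gr_N u v a))).
apply.
- move=> a; rewrite inE => -[h0 h3].
  exact: (continuous_comp (Gr_cont h0 h3) (continuous_comp (@sh_cont R _) (@Phi_cont R _))).
- by rewrite inE.
Qed.

End Local.

Lemma img_W (u v : R) (O : set T3) (g : AQ -> T3) :
  (forall x, (O `&` @reg3 R) x -> Puv u v (rep3 x) != 0) ->
  (forall z, (Vq u v `&` @Uquot R) z -> (O `&` @reg3 R) (g z) /\ Psi (g z) = z) ->
  @Psi R @` (O `&` @reg3 R) = Vq u v `&` @Uquot R.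
Proof.
move=> hP hg; apply/seteqP; split => z.
- move=> [x [Ox rx] <-]; split.
  + by apply/(inV u v rx); exact: hP.
  + by rewrite -image_part; exists x.
- by move=> hz; have [Wg Eg] := hg z hz; exists (g z).
Qed.

Lemma covering : two_fold_covering (@Psi R) (@reg3 R) (@Uquot R).
Proof.
split.
- exact: image_part.
- by apply: continuous_subspaceT; exact: Psi_cont.
- move=> y [a Ua ya].
  have [u hu] := choose_u Ua; have [v hv] := choose_v Ua.
  exists (Vq u v); split.
  + exact: Vq_open.
  + by rewrite -ya; exists a.
  + exists (O1 u v), (O2 u v); split.
    * exact: O1_open.
    * exact: O2_open.
    * apply/seteqP; split => x.
      - move=> [rx /= Vx]; have := (inV u v rx).1 Vx.
        rewrite neq_lt => /orP[h|h]; [right|left]; split => //; [exact/O2E|exact/O1E].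
      - move=> [[/O1E h rx]|[/O2E h rx]]; split => //=; apply/(inV u v rx).
        + by rewrite gt_eqF.
        + by rewrite lt_eqF.
    * apply/seteqP; split => x //= [[/O1E h1 /O2E h2] _].
      by have := lt_trans h2 h1; rewrite ltxx.
    * move=> W [->|->]; split.
      - apply: (img_W (g := g1 u v)); last exact: g1_prop.
        by move=> x [/O1E h _]; rewrite gt_eqF.
      - by apply: continuous_subspaceT; exact: Psi_cont.
      - exists (g1 u v); split.
        + exact: g1_prop.
        + exact: g1_inv.
        + exact: g1_cont.
      - apply: (img_W (g := g2 u v)); last exact: g2_prop.
        by move=> x [/O2E h _]; rewrite lt_eqF.
      - by apply: continuous_subspaceT; exact: Psi_cont.
      - exists (g2 u v); split.
        + exact: g2_prop.
        + exact: g2_inv.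
        + exact: g2_cont.
Qed.

Theorem proposition4p7' :
  two_fold_covering (@Psi R) (@reg3 R) (@Uquot R) /\
  (forall x : Torus3 R, reg3 x ->
     [set y | reg3 y /\ Psi y = Psi x] = [set x; shift3 x]).
Proof. split; [exact: covering | exact: part2]. Qed.

End M.

Theorem proposition4p7 (R : realType) :
  two_fold_covering (@Psi R) (@reg3 R) (@Uquot R) /\
  (forall x : Torus3 R, reg3 x ->
     [set y | reg3 y /\ Psi y = Psi x] = [set x; shift3 x]).
Proof. exact: proposition4p7'. Qed.
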